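(* In the setting below, assume that $g(x)$ and $l(x)$ are both self-reciprocal. If $\gcd(t_{22}(x),g_{12}(x))\neq 1$, then $C$ is not Euclidean LCD.
   Context: Let $q$ be a prime power, $F=\mathbb{F}_q$, $m\ge1$ with $\gcd(q,m)=1$, and $R=F[x]/\langle x^m-1\rangle$; elements of $R$ are represented by polynomials of degree $<m$ and identified with their coefficient vectors in $F^m$. A quasi-cyclic code of length $2m$ and index $2$ is an $R$-submodule $C\subseteq R^2$. The Euclidean inner product of $(a_1,a_2),(b_1,b_2)\in R^2$ is the sum of the standard dot products of the coefficient vectors of $a_1,b_1$ and of $a_2,b_2$; $C$ is Euclidean LCD if $C\cap C^{\perp_e}=\{0\}$. For a nonzero polynomial $f$ of degree $k$, $f^*(x)=x^kf(x^{-1})$; $f$ is self-reciprocal if $f^*=\alpha f$ for some $\alpha\in F$. Suppose $C$ is generated as an $R$-module by $(g_{11}(x),g_{12}(x))$ and $(0,g_{22}(x))$, where $g_{11},g_{12},g_{22}\in F[x]$ satisfy: $g_{11}\mid x^m-1$, $g_{22}\mid x^m-1$, $\deg g_{12}<\deg g_{22}$, and $g_{11}g_{22}\mid (x^m-1)g_{12}$. Define $g=\gcd(g_{11},g_{22})$, $l=(x^m-1)/\mathrm{lcm}(g_{11},g_{22})$, $g_{22}=g\,g_{22}'$, $r_{22}=\gcd(g_{22}',g_{22}'^* )$, $t_{22}=g_{22}'/r_{22}$. *)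

(* Defs.v *)
From HB Require Import structures.
From mathcomp Require Import all_boot all_order all_algebra all_field.
Set Implicit Arguments. Unset Strict Implicit. Unset Printing Implicit Defensive.
Import GRing.Theory.
Local Open Scope ring_scope.

Definition xm1 (F : fieldType) (m : nat) : {poly F} := 'X^m - 1.

(* Reduction into R = F[x]/<x^m-1>, elements represented by polys of degree < m *)
Definition redm (F : fieldType) (m : nat) (p : {poly F}) : {poly F} := p %% xm1 F m.

(* reciprocal polynomial f^*(x) = x^deg f f(1/x) *)
Definition recip (F : fieldType) (f : {poly F}) : {poly F} :=
  \poly_(i < size f) f`_((size f).-1 - i).

Definition self_reciprocal (F : fieldType) (f : {poly F}) : Prop :=
  f != 0 /\ exists alpha : F, recip f = alpha *: f.

Definition lcmpoly (F : fieldType) (a b : {poly F}) : {poly F} :=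
  (a * b) %/ gcdp a b.

(* The quasi-cyclic code of index 2 generated as R-module by
   (g11, g12) and (0, g22): all r1*(g11,g12) + r2*(0,g22), r1 r2 in R. *)
Definition qc_code (F : fieldType) (m : nat) (g11 g12 g22 : {poly F})
  (u : {poly F} * {poly F}) : Prop :=
  exists r1 r2 : {poly F},
    u = (redm m (r1 * g11), redm m (r1 * g12 + r2 * g22)).

(* Euclidean inner product on R^2 (via coefficient vectors in F^m) *)
Definition eip (F : fieldType) (m : nat) (u v : {poly F} * {poly F}) : F :=
  \sum_(i < m) (u.1`_i * v.1`_i + u.2`_i * v.2`_i).

(* C is Euclidean LCD : C /\ C^{perp_e} = {0} *)
Definition euclidean_LCD (F : fieldType) (m : nat)
  (C : {poly F} * {poly F} -> Prop) : Prop :=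
  forall u, C u -> (forall v, C v -> eip m u v = 0) -> u = (0, 0).

(* Main.v *)
Require Import Defs.
From HB Require Import structures.
From mathcomp Require Import all_boot all_order all_algebra all_field.
From mathcomp Require Import all_fingroup all_solvable.
From mathcomp Require Import zify.
From Stdlib Require Import Classical.
Import GRing.Theory FinRing.Theory.
Local Open Scope ring_scope.
Lemma cardF0 (F : finFieldType) : (#|F|%:R : F) = 0.
Proof. by rewrite -cardsT -zmodXgE expg_cardG // inE. Qed.

Lemma natm_neq0 (F : finFieldType) (m : nat) : (0 < m)%N -> coprime #|F| m -> (m%:R : F) != 0.
Proof.
move=> m0 co; apply/negP=> /eqP mF.
have [p pr pc] := finPcharP F.
have h1 : (p %| #|F|)%N by rewrite (dvdn_pcharf pc) cardF0.
have h2 : (p %| m)%N by rewrite (dvdn_pcharf pc) mF.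
have : (p %| gcdn #|F| m)%N by rewrite dvdn_gcd h1 h2.
by rewrite (eqP co) dvdn1 => /eqP p1; rewrite p1 in pr.
Qed.

Section Rev.
Context {F : fieldType}.
Implicit Types f g : {poly F}.

Definition rev (n : nat) f : {poly F} := \poly_(i < n) f`_(n.-1 - i).

Lemma recip_rev f : recip f = rev (size f) f. Proof. by []. Qed.

Lemma revD n f g : rev n (f + g) = rev n f + rev n g.
Proof. by apply/polyP=> i; rewrite coefD !coef_poly coefD; case: ifP; rewrite ?addr0. Qed.

Lemma rev0 n : rev n 0 = 0.
Proof. by apply/polyP=> i; rewrite coef_poly !coef0 if_same. Qed.

Lemma revZ n c f : rev n (c *: f) = c *: rev n f.
Proof. by apply/polyP=> i; rewrite coefZ !coef_poly coefZ; case: ifP; rewrite ?mulr0. Qed.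

Lemma rev_sum n (I : Type) (r : seq I) (P : pred I) (G : I -> {poly F}) :
  rev n (\sum_(i <- r | P i) G i) = \sum_(i <- r | P i) rev n (G i).
Proof. exact: (big_morph _ (revD n) (rev0 n)). Qed.

Lemma revXn n c : (c < n)%N -> rev n 'X^c = 'X^(n.-1 - c).
Proof.
move=> cn; apply/polyP=> k; rewrite coef_poly !coefXn.
case: ifP => kn.
  by have -> : (n.-1 - k == c)%N = (k == n.-1 - c)%N by apply/eqP/eqP; lia.
by have -> : (k == n.-1 - c)%N = false by apply/eqP; lia.
Qed.

Lemma poly_expand n f : (size f <= n)%N -> f = \sum_(j < n) f`_j *: 'X^j.
Proof.
move=> sf; rewrite -poly_def; apply/polyP=> k; rewrite coef_poly.
case: ifP => // kn; rewrite nth_default //; move/negbT: kn; rewrite -leqNgt => kn; exact: leq_trans sf kn.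
Qed.
Arguments poly_expand {n f}.

Lemma revM n k f g : (size f <= n)%N -> (size g <= k)%N ->
  rev (n + k).-1 (f * g) = rev n f * rev k g.
Proof.
move=> sf sg.
rewrite {1}(poly_expand sf) {1}(poly_expand sg) big_distrl rev_sum /=.
rewrite {2}(poly_expand sf) {2}(poly_expand sg) rev_sum big_distrl /=.
apply: eq_bigr => a _; rewrite big_distrr rev_sum rev_sum big_distrr /=.
apply: eq_bigr => b _.
rewrite -scalerAl -scalerAr -exprD !revZ !revXn ?ltn_ord //; last first.
  by have := ltn_ord a; have := ltn_ord b; lia.
rewrite -scalerAl -scalerAr -exprD.
have -> : ((n + k).-2 - (a + b) = n.-1 - a + (k.-1 - b))%N.
  have := ltn_ord a; have := ltn_ord b; lia.
by rewrite scalerA.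
Qed.

Lemma revK n f : (size f <= n)%N -> rev n (rev n f) = f.
Proof.
move=> sf; apply/polyP=> i; rewrite !coef_poly; case: (ltnP i n) => iN.
  have -> : (n.-1 - i < n)%N by lia.
  by congr (_`_ _); lia.
rewrite nth_default //; exact: leq_trans sf iN.
Qed.

Lemma size_rev_le n f : (size (rev n f) <= n)%N.
Proof. exact: size_poly. Qed.

Lemma coef_size f i : f`_i != 0 -> (i < size f)%N.
Proof. by apply: contraR; rewrite -leqNgt => /(nth_default 0) ->. Qed.

Lemma size_recip f : f`_0 != 0 -> size (recip f) = size f.
Proof.
move=> f0; rewrite recip_rev; apply/eqP; rewrite eqn_leq size_poly /=.
have sf : (0 < size f)%N by rewrite size_poly_gt0; apply/eqP=> e; move: f0; rewrite e coef0 eqxx.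
have := @coef_size (rev (size f) f) (size f).-1; rewrite prednK //; apply.
by rewrite coef_poly prednK // leqnn subnn.
Qed.


Lemma size_xm1 m : (0 < m)%N -> size (xm1 F m) = m.+1.
Proof. exact: size_Xn_sub_1. Qed.

Lemma xm1_neq0 m : (0 < m)%N -> xm1 F m != 0.
Proof. by move=> m0; rewrite -size_poly_gt0 size_xm1. Qed.

Lemma rev_xm1 m s : (0 < m)%N -> (1 < s)%N ->
  rev (m + s).-1 (xm1 F m) = - ('X^(s - 2) * xm1 F m).
Proof.
move=> m0 s1; apply/polyP=> i; rewrite coef_poly coefN coefXnM /xm1 !coefB !coefXn !coef1.
case: (ltnP i (m + s).-1) => h1; case: (ltnP i (s - 2)) => h2;
  repeat (case: eqP => ?); try (exfalso; lia); rewrite /= ?subrr ?oppr0 ?(addr0, add0r, sub0r, subr0, opprK, oppr0, opprB) //.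
Qed.

Lemma Xmod m i k : (i < m)%N -> (k < m)%N ->
  (('X^(m.-1 - i + k) %% xm1 F m)`_m.-1 : F) = (i == k)%:R.
Proof.
move=> im km; have m0 : (0 < m)%N by lia.
case: (leqP k i) => ki.
  rewrite modp_small; last by rewrite size_polyXn size_xm1 //; lia.
  rewrite coefXn; congr (_%:R); apply/eqP/eqP; lia.
have -> : 'X^(m.-1 - i + k) = 'X^(k - i - 1) * xm1 F m + 'X^(k - i - 1) :> {poly F}.
  rewrite /xm1 mulrBr mulr1 subrK -exprD; congr ('X^_); lia.
rewrite modp_addl_mul_small; last by rewrite size_polyXn size_xm1 //; lia.
rewrite coefXn; have -> : (m.-1 == k - i - 1)%N = false by apply/eqP; lia.
by have -> : (i == k)%N = false by apply/eqP; lia.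
Qed.

Lemma modp_sumF (d : {poly F}) (I : Type) (r : seq I) (P : pred I) (G : I -> {poly F}) :
  (\sum_(i <- r | P i) G i) %% d = \sum_(i <- r | P i) (G i %% d).
Proof. exact: (big_morph _ (fun p q => modpD d p q) (mod0p d)). Qed.

Lemma eip_rev m (c h : {poly F}) : (0 < m)%N -> (size c <= m)%N ->
  \sum_(i < m) c`_i * (h %% xm1 F m)`_i = ((rev m c * h) %% xm1 F m)`_m.-1.
Proof.
move=> m0 sc; rewrite -modp_mul.
set w := h %% xm1 F m.
have sw : (size w <= m)%N.
  by have := ltn_modpN0 h (@xm1_neq0 m m0); rewrite size_xm1.
rewrite {2}(poly_expand sc) {2}(poly_expand sw) rev_sum big_distrl modp_sumF coef_sum.
apply: eq_bigr => i _; rewrite big_distrr modp_sumF coef_sum /=.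
rewrite revZ revXn //.
rewrite (bigD1 i) //= big1 ?addr0.
  by rewrite -scalerAl -scalerAr -exprD scalerA modpZl coefZ Xmod // eqxx mulr1.
move=> k /negbTE ki.
rewrite -scalerAl -scalerAr -exprD scalerA modpZl coefZ Xmod //.
suff -> : (nat_of_ord i == nat_of_ord k) = false by rewrite mulr0.
by apply/eqP => e; move/eqP: ki; apply; apply: val_inj.
Qed.


Lemma dvd_xm1_coef0 m f : (0 < m)%N -> f %| xm1 F m -> f`_0 != 0.
Proof.
move=> m0 /dvdpP [k hk].
have : (xm1 F m)`_0 = k`_0 * f`_0 by rewrite hk coef0M.
rewrite /xm1 coefB coefXn coef1 /=.
have -> : (0 == m)%N = false by apply/eqP; lia.
move=> e; apply/eqP => f0; move: e; rewrite f0 mulr0 sub0r => /eqP.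
by rewrite oppr_eq0 oner_eq0.
Qed.

Lemma dvd_xm1_neq0 m f : (0 < m)%N -> f %| xm1 F m -> f != 0.
Proof.
move=> m0 fd; apply/eqP=> f0; move: fd; rewrite f0 dvd0p.
by rewrite (negbTE (@xm1_neq0 m m0)).
Qed.

Lemma sqf_xm1 m (p : {poly F}) : (0 < m)%N -> (m%:R : F) != 0 -> (1 < size p)%N ->
  ~ (p * p %| xm1 F m).
Proof.
move=> m0 mF sp pp.
have pd : p %| xm1 F m by apply: dvdp_trans pp; exact: dvdp_mulIl.
have p0 : p`_0 != 0 by exact: dvd_xm1_coef0 pd.
case/dvdpP: pp => k hk.
have : p %| (xm1 F m)^`().
  rewrite hk derivM derivM.
  apply: dvdp_add; first by apply: dvdp_mull; apply: dvdp_mulIl.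
  apply: dvdp_mull; apply: dvdp_add; [exact: dvdp_mull (dvdpp p) | exact: dvdp_mulIl].
rewrite /xm1 derivB derivXn derivC subr0 -mulr_natr -polyC_natr.
rewrite Gauss_dvdpr; last first.
  apply: coprimep_expr; rewrite coprimepX rootE horner_coef0; exact: p0.
move=> /dvdp_leq; rewrite polyC_eq0 mF => /(_ isT); rewrite size_polyC mF /=.
by move=> h; move: sp; rewrite ltnNge h.
Qed.

Lemma recip_div m (p : {poly F}) f : (0 < m)%N -> irreducible_poly p -> p %| xm1 F m ->
  f %| xm1 F m -> ~~ coprimep f (recip p) -> p %| recip f.
Proof.
move=> m0 ip pd fd nco.
set h := gcdp f (recip p).
have f0 : f != 0 by exact: dvd_xm1_neq0 fd.
have hd : h %| xm1 F m by apply: dvdp_trans fd; exact: dvdp_gcdl.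
have h0 : h`_0 != 0 by exact: dvd_xm1_coef0 hd.
have hn0 : h != 0 by exact: dvd_xm1_neq0 hd.
have sh : size h != 1%N by rewrite -coprimep_def.
have p0 : p`_0 != 0 by exact: dvd_xm1_coef0 pd.
have rh : size (rev (size h) h) = size h by rewrite -recip_rev size_recip.
have d1 : rev (size h) h %| recip f.
  case/dvdpP: (dvdp_gcdl f (recip p)) => k hk; rewrite -/h in hk.
  have k0 : k != 0 by apply: contraNneq f0 => k0; rewrite hk k0 mul0r.
  rewrite recip_rev hk size_mul // revM //; exact: dvdp_mull.
have d2 : rev (size h) h %| p.
  case/dvdpP: (dvdp_gcdr f (recip p)) => k hk; rewrite -/h in hk.
  have rp0 : recip p != 0 by rewrite -size_poly_gt0 size_recip // size_poly_gt0; exact: irredp_neq0.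
  have k0 : k != 0 by apply: contraNneq rp0 => k0; rewrite hk k0 mul0r.
  have -> : p = rev (size p) (recip p) by rewrite recip_rev revK.
  rewrite -(@size_recip p p0) hk size_mul // revM //; exact: dvdp_mull.
have e : rev (size h) h %= p by apply: ip => //; rewrite rh.
by rewrite -(eqp_dvdl _ e).
Qed.


Lemma ex_irred (d : {poly F}) : (1 < size d)%N -> exists p, irreducible_poly p /\ p %| d.
Proof.
move: {2}(size d) (leqnn (size d)) => n; elim: n d => [|n IH] d sdn sd; first lia.
case: (classic (irreducible_poly d)) => [id|nid]; first by exists d; split => //; exact: dvdpp.
have [q [sq [qd nqd]]] : exists q : {poly F}, size q != 1%N /\ q %| d /\ ~ (q %= d).
  apply: NNPP => H; apply: nid; split => // q sq qd.
  apply: NNPP => nq; apply: H; exists q; tauto.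
have d0 : d != 0 by rewrite -size_poly_gt0; lia.
have q0 : q != 0 by apply/eqP => q0; move: qd; rewrite q0 dvd0p (negbTE d0).
have sqd : (size q < size d)%N.
  have := dvdp_leq d0 qd; have := dvdp_size_eqp qd.
  case: eqP => [_ e|ne _ le]; first by exfalso; apply: nqd; rewrite -e.
  by rewrite ltn_neqAle le andbT; apply/eqP.
have sq1 : (1 < size q)%N by move: sq; rewrite -size_poly_gt0 in q0; lia.
have [p [ip pq]] := IH q ltac:(lia) sq1.
by exists p; split => //; exact: dvdp_trans qd.
Qed.

End Rev.

Lemma dvdpT {F : fieldType} {p q r : {poly F}} : p %| q -> q %| r -> p %| r.
Proof. move=> h1 h2; exact: dvdp_trans h1 h2. Qed.

Theorem lemma3p4 (F : finFieldType) (m : nat) (g11 g12 g22 : {poly F}) :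
  (0 < m)%N ->
  coprime #|F| m ->
  g11 %| xm1 F m ->
  g22 %| xm1 F m ->
  (size g12 < size g22)%N ->
  (g11 * g22) %| (xm1 F m * g12) ->
  let g := gcdp g11 g22 in
  let l := xm1 F m %/ lcmpoly g11 g22 in
  let g22' := g22 %/ g in
  let r22 := gcdp g22' (recip g22') in
  let t22 := g22' %/ r22 in
  self_reciprocal g ->
  self_reciprocal l ->
  ~~ coprimep t22 g12 ->
  ~ euclidean_LCD m (qc_code m g11 g12 g22).
Proof.
move=> m0 co d11 d22 s12 _ g l g22' r22 t22 [g0 [al hal]] _ nco LCD.
have mF := @natm_neq0 F m m0 co.
have g22n0 : g22 != 0 by exact: dvd_xm1_neq0 d22.
have eg22 : g22 = g22' * g by rewrite /g22' divpK //; exact: dvdp_gcdr.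
have eg22' : g22' = t22 * r22 by rewrite /t22 divpK //; exact: dvdp_gcdl.
have g22'n0 : g22' != 0 by apply: contraNneq g22n0 => e; rewrite eg22 e mul0r.
have t22n0 : t22 != 0 by apply: contraNneq g22'n0 => e; rewrite eg22' e mul0r.
have d22' : g22' %| xm1 F m by apply: dvdpT _ d22; rewrite eg22; exact: dvdp_mulIl.
have dg : g %| xm1 F m by apply: dvdpT _ d22; exact: dvdp_gcdr.
set d := gcdp t22 g12.
have sd : (1 < size d)%N.
  have : size d != 1%N by rewrite -coprimep_def.
  have : d != 0 by rewrite gcdp_eq0 negb_and t22n0.
  rewrite -size_poly_gt0; lia.
have [p [ip pd]] := @ex_irred _ d sd.
have pt : p %| t22 := dvdpT pd (dvdp_gcdl _ _).
have p12 : p %| g12 := dvdpT pd (dvdp_gcdr _ _).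
have p22' : p %| g22' by rewrite eg22'; exact: dvdp_mulr.
have p22 : p %| g22 by rewrite eg22; exact: dvdp_mulr.
have pxm : p %| xm1 F m by exact: dvdpT p22 d22.
have sp : (1 < size p)%N by case: ip.
have cop : coprimep g22 (recip p).
  rewrite eg22 coprimepMl; apply/andP; split; apply: contraT => nc.
    have pr : p %| recip g22' by exact: recip_div m0 ip pxm d22' nc.
    have pr22 : p %| r22 by rewrite dvdp_gcd p22' pr.
    have : p * p %| g22' by rewrite eg22'; exact: dvdp_mul.
    move=> h; exfalso; apply: (@sqf_xm1 _ m p m0 mF sp); exact: dvdpT h d22'.
  have pr : p %| recip g by exact: recip_div m0 ip pxm dg nc.
  have al0 : al != 0.
    case: (eqVneq al 0) => [a0|//]; exfalso.
    have := @size_recip _ g (@dvd_xm1_coef0 _ m g m0 dg).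
    rewrite hal a0 scale0r size_poly0 => /esym/eqP; rewrite size_poly_eq0.
    by apply/negP.
  have pg : p %| g by move: pr; rewrite hal dvdpZr.
  have : p * p %| g22' * g by exact: dvdp_mul.
  move=> h; exfalso; apply: (@sqf_xm1 _ m p m0 mF sp); rewrite -eg22 in h; exact: dvdpT h d22.
have [e ep] : exists e, e * p = xm1 F m by exists (xm1 F m %/ p); rewrite divpK.
have xn : xm1 F m != 0 := @xm1_neq0 _ m m0.
have e0 : e != 0 by apply/eqP => e0; move: ep; rewrite e0 => ep0; move: xn; rewrite -ep0 mul0r eqxx.
have p0 : p != 0 by exact: irredp_neq0.
have se : (size e <= m)%N.
  have := size_mul e0 p0; rewrite ep size_xm1 // => h; clear - h sp; lia.
have [c hcd] : exists c, c = rev m e by exists (rev m e).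
have hc : c * recip p = - ('X^(size p - 2) * xm1 F m).
  by rewrite hcd -rev_xm1 // -ep revM.
have cne0 : c != 0.
  apply/eqP => c0; move: hc; rewrite c0 mul0r => /esym/eqP.
  by rewrite oppr_eq0 mulf_eq0 (negbTE xn) orbF expf_eq0 polyX_eq0 andbF.
have g22c : g22 %| c.
  rewrite -(Gauss_dvdpl _ cop) hc -scaleN1r dvdpZr ?oppr_eq0 ?oner_eq0 //.
  exact: dvdp_mull.
have sc : (size c <= m)%N by rewrite hcd; exact: size_rev_le.
case/dvdpP: g22c => a ha.
have Cu : qc_code m g11 g12 g22 (0, c).
  exists 0, a; rewrite /redm !mul0r mod0p add0r -ha modp_small //.
  by rewrite size_xm1 //.
have := LCD (0, c) Cu.
have orth : forall v, qc_code m g11 g12 g22 v -> eip m (0, c) v = 0.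
  move=> v [r1 [r2 ->]]; rewrite /eip /redm /=.
  under eq_bigr do rewrite coef0 mul0r add0r.
  rewrite eip_rev // hcd revK //.
  have : p %| r1 * g12 + r2 * g22 by apply: dvdp_add; exact: dvdp_mull.
  case/dvdpP => s' ->; rewrite mulrA (mulrC e) -mulrA ep modp_mull.
  by rewrite coef0.
move=> /(_ orth) [] /eqP; exact/negP.
Qed.
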